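(* Let $a\in\mathbb{R}^{p+1}$ (i.e. $a=\sum_{s=0}^pa_sv_s$ with $a_s\in\mathbb{R}$) and $\underline{\omega}\in\mathbb{S}$. Then for every $b\in\mathbb{A}$, $$a(\underline{\omega}b)=\underline{\omega}(a^cb).$$
   Context: Let $\mathbb{A}$ be a real alternative algebra (the associator $[a,b,c]=(ab)c-a(bc)$ is an alternating trilinear function) with unity $1$, of finite real dimension $d>1$, equipped with an anti-involution $a\mapsto a^c$ (real linear, $a^c=a$ for real $a$, $(a^c)^c=a$, $(ab)^c=b^ca^c$). Let $t(x)=x+x^c$, $n(x)=xx^c$, $\mathbb{S}_{\mathbb{A}}=\{x: t(x)=0,\ n(x)=1\}$ (assumed nonempty) and $Q_{\mathbb{A}}=\mathbb{R}\cup\{x: t(x)\in\mathbb{R},\ n(x)\in\mathbb{R},\ 4n(x)>t(x)^2\}$. Let $M$ be a real subspace with $\mathbb{R}\subsetneq M\subseteq Q_{\mathbb{A}}$ having a basis $(v_0,\dots,v_m)$, $m\ge1$, $v_0=1$, $v_s\in\mathbb{S}_{\mathbb{A}}$, $v_sv_t=-v_tv_s$ for distinct $s,t\ge1$. Fix $p\in\{0,\dots,m-1\}$; $\mathbb{R}^{p+1}$ denotes the span of $v_0,\dots,v_p$ and $\mathbb{S}=\{\sum_{s=p+1}^mx_sv_s: x_s\in\mathbb{R},\ \sum_{s=p+1}^m x_s^2=1\}$. *)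

(* Defs.v *)
From HB Require Import structures.
From mathcomp Require Import all_boot all_order all_algebra.
From mathcomp Require Import reals.
Set Implicit Arguments. Unset Strict Implicit. Unset Printing Implicit Defensive.
Import Order.TTheory GRing.Theory Num.Theory.
Local Open Scope ring_scope.

Section AltAlg.
Variables (R : realType) (A : vectType R).
Variables (mul : A -> A -> A) (one : A) (cj : A -> A).

Definition is_real (x : A) : Prop := exists r : R, x = r *: one.

Definition associator (a b c : A) : A := mul (mul a b) c - mul a (mul b c).

Record alt_alg_inv : Prop := AltAlgInv {
  mulDl : forall x y z, mul (x + y) z = mul x z + mul y z;
  mulDr : forall x y z, mul x (y + z) = mul x y + mul x z;
  mulZl : forall (r : R) x y, mul (r *: x) y = r *: mul x y;
  mulZr : forall (r : R) x y, mul x (r *: y) = r *: mul x y;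
  mul1l : forall x, mul one x = x;
  mul1r : forall x, mul x one = x;
  assoc_alt12 : forall x y, associator x x y = 0;
  assoc_alt13 : forall x y, associator x y x = 0;
  assoc_alt23 : forall x y, associator y x x = 0;
  cjD : forall x y, cj (x + y) = cj x + cj y;
  cjZ : forall (r : R) x, cj (r *: x) = r *: cj x;
  cj_real : forall r : R, cj (r *: one) = r *: one;
  cjK : forall x, cj (cj x) = x;
  cjM : forall x y, cj (mul x y) = mul (cj y) (cj x)
}.

Definition tr (x : A) : A := x + cj x.
Definition nrm (x : A) : A := mul x (cj x).

Definition in_SA (x : A) : Prop := tr x = 0 /\ nrm x = one.

Definition in_QA (x : A) : Prop :=
  is_real x \/
  exists t n : R, tr x = t *: one /\ nrm x = n *: one /\ t ^+ 2 < 4 * n.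

End AltAlg.

(* Main.v *)
Require Import Defs.
From HB Require Import structures.
From mathcomp Require Import all_boot all_order all_algebra.
From mathcomp Require Import reals.
Import Order.TTheory GRing.Theory Num.Theory.
Local Open Scope ring_scope.

Lemma zm (V : zmodType) (a n b c d e f : V) :
  a + - n + (n + b) - (c + d + (e + f)) = 0 -> a - c = 0 -> b - f = 0 -> d = - e.
Proof.
move=> H /subr0_eq Ha /subr0_eq Hb; subst a b.
move: H; rewrite addrA subrK.
rewrite (addrC c d) -(addrA d) (addrCA c) (addrA d) opprD addrCA subrr addr0 => /eqP.
by rewrite oppr_eq0 addr_eq0 => /eqP.
Qed.

Section S.
Variables (R : realType) (A : vectType R) (mul : A -> A -> A) (one : A) (cj : A -> A).
Hypothesis HA : alt_alg_inv mul one cj.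

Lemma mulNl' u z : mul (- u) z = - mul u z.
Proof. by rewrite -scaleN1r (mulZl HA) scaleN1r. Qed.
Lemma mulNr' u z : mul z (- u) = - mul z u.
Proof. by rewrite -scaleN1r (mulZr HA) scaleN1r. Qed.
Lemma mul0l' z : mul 0 z = 0.
Proof. by have := mulZl HA 0 0 z; rewrite !scale0r. Qed.
Lemma mul0r' z : mul z 0 = 0.
Proof. by have := mulZr HA 0 z 0; rewrite !scale0r. Qed.
Lemma cj0 : cj 0 = 0.
Proof. by have := cjZ HA 0 0; rewrite !scale0r. Qed.

Lemma mul_suml' (I : Type) (r : seq I) (P : pred I) (c : I -> R) (u : I -> A) y :
  mul (\sum_(i <- r | P i) c i *: u i) y = \sum_(i <- r | P i) c i *: mul (u i) y.
Proof.
rewrite (big_morph (fun x => mul x y) (fun a b => mulDl HA a b y) (mul0l' y)).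
by apply: eq_bigr => i _; rewrite (mulZl HA).
Qed.
Lemma mul_sumr' (I : Type) (r : seq I) (P : pred I) (c : I -> R) (u : I -> A) y :
  mul y (\sum_(i <- r | P i) c i *: u i) = \sum_(i <- r | P i) c i *: mul y (u i).
Proof.
rewrite (big_morph (fun x => mul y x) (fun a b => mulDr HA y a b) (mul0r' y)).
by apply: eq_bigr => i _; rewrite (mulZr HA).
Qed.
Lemma cj_sum (I : Type) (r : seq I) (P : pred I) (c : I -> R) (u : I -> A) :
  cj (\sum_(i <- r | P i) c i *: u i) = \sum_(i <- r | P i) c i *: cj (u i).
Proof.
rewrite (big_morph cj (cjD HA) cj0).
by apply: eq_bigr => i _; rewrite (cjZ HA).
Qed.

Lemma key (x y z : A) : mul x y = - mul y x ->
  mul x (mul y z) = - mul y (mul x z).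
Proof.
move=> Hxy.
have H := assoc_alt12 HA (x + y) z.
have Hx := assoc_alt12 HA x z.
have Hy := assoc_alt12 HA y z.
move: H Hx Hy; rewrite /associator !(mulDl HA, mulDr HA) Hxy mulNl'.
exact: zm.
Qed.
End S.

Theorem lemma3p2 (R : realType) (A : vectType R)
  (mul : A -> A -> A) (one : A) (cj : A -> A)
  (HA : alt_alg_inv mul one cj)
  (Hdim : (1 < \dim (fullv : {vspace A}))%N)
  (HSne : exists x : A, in_SA mul one cj x)
  (m : nat) (v : nat -> A)
  (Hm : (1 <= m)%N)
  (Hfree : free (mkseq v m.+1))
  (Hv0 : v 0%N = one)
  (HvS : forall s : nat, (1 <= s <= m)%N -> in_SA mul one cj (v s))
  (Hanti : forall s t : nat, (1 <= s <= m)%N -> (1 <= t <= m)%N -> s <> t ->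
             mul (v s) (v t) = - mul (v t) (v s))
  (HRM : (<[one]> <= <<mkseq v m.+1>>)%VS /\ <[one]>%VS != <<mkseq v m.+1>>%VS)
  (HMQ : forall x : A, x \in <<mkseq v m.+1>>%VS -> in_QA mul one cj x)
  (p : nat) (Hp : (p < m)%N)
  (a : nat -> R) (x : nat -> R)
  (Hx : \sum_(p.+1 <= s < m.+1) x s ^+ 2 = 1)
  (b : A) :
  let av := \sum_(0 <= s < p.+1) a s *: v s in
  let w := \sum_(p.+1 <= s < m.+1) x s *: v s in
  mul av (mul w b) = mul w (mul (cj av) b).
Proof.
move=> av w.
have cjv s : (1 <= s <= m)%N -> cj (v s) = - v s.
  move=> /HvS [Ht _]; apply/eqP; rewrite -addr_eq0 addrC; apply/eqP; exact: Ht.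
set a' := \sum_(1 <= s < p.+1) a s *: v s.
have Hav : av = a 0%N *: one + a' by rewrite /av big_ltn // Hv0.
have Hcj : cj av = a 0%N *: one - a'.
  rewrite Hav (cjD HA) (cj_real HA) /a' (@cj_sum _ _ _ _ _ HA) -sumrN; congr (_ + _).
  rewrite big_nat_cond [RHS]big_nat_cond.
  apply: eq_bigr => s /andP [/andP [H1 H2] _].
  by rewrite cjv ?scalerN // H1 /=; apply: ltnW; apply: leq_trans H2 Hp.
rewrite Hcj Hav !(mulDl HA) (mulDr HA) !(mulZl HA) !(mul1l HA) (mulZr HA).
rewrite (@mulNl' _ _ _ _ _ HA) (@mulNr' _ _ _ _ _ HA); congr (_ + _).
rewrite /a' /w (@mul_suml' _ _ _ _ _ HA).
under eq_bigr => s _ do rewrite (@mul_suml' _ _ _ _ _ HA) (@mul_sumr' _ _ _ _ _ HA).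
rewrite (@mul_suml' _ _ _ _ _ HA).
under [in RHS]eq_bigr => t _ do rewrite (@mul_suml' _ _ _ _ _ HA) (@mul_sumr' _ _ _ _ _ HA) scaler_sumr.
under eq_bigr => s _ do rewrite scaler_sumr.
rewrite [in RHS]exchange_big_nat /= -sumrN big_nat_cond [RHS]big_nat_cond.
apply: eq_bigr => s /andP [/andP [H1 H2] _].
rewrite -sumrN big_nat_cond [RHS]big_nat_cond.
apply: eq_bigr => t /andP [/andP [H3 H4] _].
rewrite !scalerA mulrC -scalerN; congr (_ *: _).
apply: (@key _ _ _ _ _ HA); apply: Hanti.
- by rewrite H1 /=; apply: ltnW; apply: leq_trans H2 Hp.
- by rewrite (leq_trans _ H3).
- by move=> E; move: H2 H3; rewrite E => /leq_trans H /H; rewrite ltnn.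
Qed.
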